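(* Let $A>0$, $\phi>0$, $0<\gamma<1$, and $\alpha,\beta>0$ with $\alpha+\beta<1$. For $k,N>0$ define $n^*(k,N)=\frac{1-\alpha}{2\phi kN^{\gamma}}$ and $e^*(k,N)=\frac{\alpha}{1-\alpha}\phi k^{2}N^{\gamma}$, and the map $F_S(k,N)=\big(A\,e^*(k,N)^{\alpha}k^{\beta},\ n^*(k,N)N\big)$. Let $(\bar k,\bar N)$ be the unique fixed point of $F_S$ with $\bar k,\bar N>0$. Write $\bar e=e^*(\bar k,\bar N)$ and let $$E_k=\frac{\partial e^*}{\partial k}(\bar k,\bar N)=\frac{2\alpha\phi}{1-\alpha}\bar k\bar N^{\gamma},\quad E_N=\frac{\partial e^*}{\partial N}(\bar k,\bar N)=\frac{\alpha\gamma\phi}{1-\alpha}\bar k^{2}\bar N^{\gamma-1},$$ $$D_k=\frac{\partial n^*}{\partial k}(\bar k,\bar N)=-\frac{1-\alpha}{2\phi\bar k^{2}\bar N^{\gamma}},\quad D_N=\frac{\partial n^*}{\partial N}(\bar k,\bar N)=-\frac{\gamma(1-\alpha)}{2\phi\bar k\bar N^{\gamma+1}}.$$ Suppose $$1-\frac{\alpha\bar e^{\alpha-1}E_N\bar k^{\beta}D_k\bar N}{\alpha\bar e^{\alpha-1}E_k\bar k^{\beta}+\frac{\beta}{A}}-\frac{1}{A\alpha\bar e^{\alpha-1}E_k\bar k^{\beta}+\beta}<-D_N\bar N<1-\frac{A\alpha\bar e^{\alpha-1}E_N\bar k^{\beta}D_k\bar N}{1+A\alpha\bar e^{\alpha-1}E_k\bar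 k^{\beta}+\beta}$$ and $$A\alpha\bar e^{\alpha-1}E_k\bar k^{\beta}+\beta>1.$$ Then $(\bar k,\bar N)$ is locally asymptotically stable, i.e. both eigenvalues of the Jacobian matrix of $F_S$ at $(\bar k,\bar N)$ have modulus strictly less than $1$.
   Context: Overlapping-generations model with human capital $k_t$ and adult population $N_t$, in the case where parental childcare times are perfect substitutes; $n^*$ and $e^*$ are the household's optimal fertility and education spending and the dynamics are $(k_{t+1},N_{t+1})=F_S(k_t,N_t)$. The fixed point $(\bar k,\bar N)$ is $\bar k=(A^{1/\alpha}\alpha/2)^{\alpha/(1-\beta-\alpha)}$, $\bar N=\left(\frac{1-\alpha}{2\phi\bar k}\right)^{1/\gamma}$. *)

(* Defs.v *)
From HB Require Import structures.
From mathcomp Require Import all_boot all_order all_algebra.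
From mathcomp Require Import all_classical all_reals all_analysis.
From mathcomp Require Import complex.
Set Implicit Arguments. Unset Strict Implicit. Unset Printing Implicit Defensive.
Import Order.TTheory GRing.Theory Num.Theory.
Local Open Scope ring_scope.

Section Model.
Variable R : realType.
Variables (A phi gamma alpha beta : R).

Definition nstar (k N : R) : R := (1 - alpha) / (2 * phi * k * N `^ gamma).

Definition estar (k N : R) : R := alpha / (1 - alpha) * phi * k ^+ 2 * N `^ gamma.

Definition FS1 (k N : R) : R := A * (estar k N) `^ alpha * k `^ beta.
Definition FS2 (k N : R) : R := nstar k N * N.

Definition jacobianFS (k N : R) : 'M[R]_2 :=
  \matrix_(i < 2, j < 2)
    match val i, val j with
    | 0%N, 0%N => derive1 (fun x => FS1 x N) k
    | 0%N, _   => derive1 (fun y => FS1 k y) N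
    | _,   0%N => derive1 (fun x => FS2 x N) k
    | _,   _   => derive1 (fun y => FS2 k y) N
    end.

End Model.

Definition complex_eigenvalue (R : realType) (n : nat) (M : 'M[R]_n.+1)
    (z : R[i]) : Prop :=
  eigenvalue (map_mx (fun x : R => (x%:C)%C) M) z.

(* Main.v *)
Require Import Defs.
From HB Require Import structures.
From mathcomp Require Import all_boot all_order all_algebra.
From mathcomp Require Import all_classical all_reals all_analysis.
From mathcomp Require Import complex.
From mathcomp Require Import ring lra.
Import Order.TTheory GRing.Theory Num.Theory.
Local Open Scope ring_scope.
Lemma J11 (R : realType) (A phi gamma alpha beta kb Nb : R) : 0 < kb ->
  0 < estar phi gamma alpha kb Nb ->
  derive1 (fun x => FS1 A phi gamma alpha beta x Nb) kb =
  A * (alpha * (estar phi gamma alpha kb Nb) `^ (alpha - 1) *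
       (alpha / (1 - alpha) * phi * (2 * kb) * Nb `^ gamma)) * kb `^ beta
  + A * (estar phi gamma alpha kb Nb) `^ alpha * (beta * kb `^ (beta - 1)).
Proof.
move=> hk he.
rewrite derive1E; apply: derive_val.
pose c := alpha / (1 - alpha) * phi.
have -> : (fun x => FS1 A phi gamma alpha beta x Nb) =
  (cst A * (((@powR R)^~alpha) \o (fun x => estar phi gamma alpha x Nb))) * ((@powR R)^~beta).
  by apply/funext => x /=; rewrite /FS1.
have de : is_derive kb 1 (fun x => estar phi gamma alpha x Nb) (alpha / (1 - alpha) * phi * (2 * kb) * Nb `^ gamma).
  have -> : (fun x => estar phi gamma alpha x Nb) = (alpha / (1 - alpha) * phi * Nb `^ gamma) *: ((@id R) * id).
    by apply/funext => x; rewrite /estar /= -mulrA [_ * Nb `^ _]mulrC mulrA.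
  apply: is_derive_eq.
  by change ((alpha / (1 - alpha) * phi * Nb `^ gamma) * (kb * 1 + kb * 1) = alpha / (1 - alpha) * phi * (2 * kb) * Nb `^ gamma); ring.
have dp := is_derive1_powR alpha he.
have dq := is_derive1_powR beta hk.
apply: is_derive_eq.
rewrite scaler0 addr0.
match goal with |- ?a *: ?b + ?c *: (?d *: ?e) = ?r => change (a * b + c * (d * e) = r) end.
by rewrite /= addrC mulrC.
Qed.
Lemma J12 (R : realType) (A phi gamma alpha beta kb Nb : R) : 0 < Nb ->
  0 < estar phi gamma alpha kb Nb ->
  derive1 (fun y => FS1 A phi gamma alpha beta kb y) Nb =
  A * (alpha * (estar phi gamma alpha kb Nb) `^ (alpha - 1) *
       (alpha / (1 - alpha) * phi * kb ^+ 2 * (gamma * Nb `^ (gamma - 1)))) * kb `^ beta.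
Proof.
move=> hN he.
rewrite derive1E; apply: derive_val.
have -> : (fun y => FS1 A phi gamma alpha beta kb y) =
  (cst A * ((@powR R)^~alpha \o (estar phi gamma alpha kb))) * cst (kb `^ beta).
  by apply/funext => y; rewrite /FS1.
have de : is_derive Nb 1 (estar phi gamma alpha kb) (alpha / (1 - alpha) * phi * kb ^+ 2 * (gamma * Nb `^ (gamma - 1))).
  have -> : (estar phi gamma alpha kb) = (alpha / (1 - alpha) * phi * kb ^+ 2) *: (@powR R)^~gamma.
    by apply/funext => y.
  apply: is_derive_eq; first exact: is_deriveZ (is_derive1_powR gamma hN).
  by [].
have dp := is_derive1_powR alpha he.
apply: is_derive_eq.
rewrite !scaler0 addr0 add0r.
match goal with |- ?c *: (?d *: ?e) = ?r => change (c * (d * e) = r) end.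
by rewrite /= mulrC.
Qed.

Lemma J21 (R : realType) (phi gamma alpha kb Nb : R) : 0 < kb -> 0 < phi -> 0 < Nb ->
  derive1 (fun x => FS2 phi gamma alpha x Nb) kb =
  ((1 - alpha) * Nb) * (- (2 * phi * Nb `^ gamma * kb) ^- 2 * (2 * phi * Nb `^ gamma)).
Proof.
move=> hk hp hN.
rewrite derive1E; apply: derive_val.
set s := Nb `^ gamma.
have hs : 0 < s by exact: powR_gt0.
have -> : (fun x => FS2 phi gamma alpha x Nb) =
  ((1 - alpha) * Nb) \*: (fun x => (((2 * phi * s) *: (@id R)) x)^-1).
  apply/funext => x; rewrite /FS2 /nstar /= -/s.
  have -> : 2 * phi * x * s = 2 * phi * s * x by ring.
  by rewrite mulrAC.
have nz : ((2 * phi * s) *: (@id R)) kb != 0.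
  by rewrite /= gt_eqF // !mulr_gt0.
have dv := is_deriveV nz (is_deriveZ (2 * phi * s) (is_derive_id kb 1)).
apply: (is_derive_eq (is_deriveZ ((1 - alpha) * Nb) dv)).
match goal with |- ?c *: (?d *: ?e%:A) = ?r => change (c * (d * (e * 1)) = r) end.
by rewrite mulr1.
Qed.

Lemma J22 (R : realType) (phi gamma alpha kb Nb : R) : 0 < kb -> 0 < phi -> 0 < Nb ->
  derive1 (fun y => FS2 phi gamma alpha kb y) Nb =
  (1 - alpha) * ((2 * phi * kb * Nb `^ gamma)^-1 * 1 +
     Nb * (- (2 * phi * kb * Nb `^ gamma) ^- 2 * (2 * phi * kb * (gamma * Nb `^ (gamma - 1))))).
Proof.
move=> hk hp hN.
rewrite derive1E; apply: derive_val.
have -> : (fun y => FS2 phi gamma alpha kb y) =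
  (1 - alpha) \*: ((fun y => (((2 * phi * kb) *: (@powR R)^~gamma) y)^-1) * (@id R)).
  apply/funext => y; rewrite /FS2 /nstar /=.
  change ((1 - alpha) / (2*phi*kb*y`^gamma) * y = (1-alpha) * ((2*phi*kb*y`^gamma)^-1 * y)).
  by rewrite mulrA.
have nz : ((2 * phi * kb) *: (@powR R)^~gamma) Nb != 0.
  by rewrite /= gt_eqF // !mulr_gt0 // powR_gt0.
have dv := is_deriveV nz (is_deriveZ (2 * phi * kb) (is_derive1_powR gamma hN)).
have h := is_deriveZ (1 - alpha) (is_deriveM dv (is_derive_id Nb 1)).
eapply is_derive_eq; [exact h|].
by [].
Qed.
Lemma eig2 (R : realType) (M : 'M[R]_2) (z : R[i]) :
  complex_eigenvalue M z ->
  z ^+ 2 - ((M 0 0 + M 1 1)%:C)%C * z + ((M 0 0 * M 1 1 - M 0 1 * M 1 0)%:C)%C = 0.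
Proof.
move=> /eigenvalueP [v hv nz].
have e0 := congr1 (fun w : 'M[R[i]]_(1,2) => w 0 0) hv.
have e1 := congr1 (fun w : 'M[R[i]]_(1,2) => w 0 1) hv.
move: e0 e1; rewrite /= !mxE !big_ord_recl !big_ord0 !mxE /= !addr0.
have l1 : lift ord0 ord0 = 1 :> 'I_2 by apply/val_inj.
have l0 : ord0 = 0 :> 'I_2 by apply/val_inj.
rewrite l1 l0.
set a := v 0 0; set b := v 0 1.
set m00 := (M 0 0)%:C%C; set m01 := (M 0 1)%:C%C; set m10 := (M 1 0)%:C%C; set m11 := (M 1 1)%:C%C.
move=> e0 e1.
rewrite rmorphB rmorphD !rmorphM /= -/m00 -/m01 -/m10 -/m11.
set p := _ + _.
have pa : p * a = 0.
  have -> : p * a = (z - m11)*(z*a - (a* m00 + b* m10)) + m10*(z*b - (a* m01+b* m11)) by rewrite /p; ring.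
  by rewrite e0 e1 !subrr !mulr0 addr0.
have pb : p * b = 0.
  have -> : p * b = (z - m00)*(z*b - (a* m01 + b* m11)) + m01*(z*a - (a* m00+b* m10)) by rewrite /p; ring.
  by rewrite e0 e1 !subrr !mulr0 addr0.
case: (eqVneq a 0) => ha.
  case: (eqVneq b 0) => hb.
    exfalso; move/eqP: nz; apply; apply/rowP => j; rewrite mxE.
    case: j => [[|[|//]] hj].
      by rewrite -ha /a; congr (v _ _); apply/val_inj.
    by rewrite -hb /b; congr (v _ _); apply/val_inj.
  by move/eqP: pb; rewrite mulf_eq0 (negbTE hb) orbF => /eqP.
by move/eqP: pa; rewrite mulf_eq0 (negbTE ha) orbF => /eqP.
Qed.
Lemma root_lt1 (R : realType) (T D : R) (z : R[i]) : D < 1 -> 0 < 1 - T + D -> 0 < 1 + T + D ->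
  z ^+ 2 - (T%:C)%C * z + (D%:C)%C = 0 -> `|z| < 1.
Proof.
move=> h1 h2 h3.
case: z => x y E.
have eR := congr1 (@complex.Re R) E.
have eI := congr1 (@complex.Im R) E.
move: eR eI; rewrite /= . simpc. move=> eR eI.
rewrite /Normc.normc -sqrtr1 ltr_sqrt ?ltr01 //.
case: (eqVneq y 0) => hy.
  rewrite hy in eR *.
  have eR' : x ^+ 2 = T * x - D by rewrite expr2; lra.
  rewrite expr0n /= addr0.
  case: (ltrP x 1) => hx1.
    case: (ltrP (-1) x) => hx2.
      nra.
    have hp : 0 < (1 + x) * (1 + (T - x)) by nra.
    nra.
  have hp : 0 < (1 - x) * (1 - (T - x)) by nra.
  nra.
have hx : x * 2 = T.
  apply: (mulIf hy); lra.
nra.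
Qed.

Theorem proposition2 (R : realType) (A phi gamma alpha beta kb Nb : R)
  (hA : 0 < A) (hphi : 0 < phi) (hg0 : 0 < gamma) (hg1 : gamma < 1)
  (ha : 0 < alpha) (hb : 0 < beta) (hab : alpha + beta < 1)
  (hk : 0 < kb) (hN : 0 < Nb)
  (hfix1 : FS1 A phi gamma alpha beta kb Nb = kb)
  (hfix2 : FS2 phi gamma alpha kb Nb = Nb) :
  let eb := estar phi gamma alpha kb Nb in
  let Ek := 2 * alpha * phi / (1 - alpha) * kb * Nb `^ gamma in
  let EN := alpha * gamma * phi / (1 - alpha) * kb ^+ 2 * Nb `^ (gamma - 1) in
  let Dk := - ((1 - alpha) / (2 * phi * kb ^+ 2 * Nb `^ gamma)) in
  let DN := - (gamma * (1 - alpha) / (2 * phi * kb * Nb `^ (gamma + 1))) in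
  let a := alpha * eb `^ (alpha - 1) * kb `^ beta in
  1 - a * EN * Dk * Nb / (a * Ek + beta / A) - 1 / (A * a * Ek + beta)
    < - DN * Nb ->
  - DN * Nb < 1 - A * a * EN * Dk * Nb / (1 + A * a * Ek + beta) ->
  1 < A * a * Ek + beta ->
  forall z : R[i],
    complex_eigenvalue (jacobianFS A phi gamma alpha beta kb Nb) z ->
    `|z| < 1.
Proof.
move=> eb Ek EN Dk DN a H1 H2 H3 z /eig2 hz.
set s := Nb `^ gamma.
have hs : 0 < s by exact: powR_gt0.
have h1a : 0 < 1 - alpha by lra.
have he : 0 < eb.
  by rewrite /eb /estar -/s !mulr_gt0 // ?divr_gt0 // invr_gt0.
set pe := eb `^ alpha.
set pk := kb `^ beta.
have hpk : 0 < pk by rewrite /pk powR_gt0.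
have hpe : 0 < pe by rewrite /pe powR_gt0.
have powm1 : forall x r : R, 0 < x -> x `^ (r - 1) = x `^ r / x.
  move=> x r hx; rewrite powRB; last by rewrite (gt_eqF hx) implybT.
  by rewrite (powRr1 (ltW hx)).
have powp1 : forall x r : R, 0 < x -> x `^ (r + 1) = x `^ r * x.
  move=> x r hx; rewrite powRD; last by rewrite (gt_eqF hx) implybT.
  by rewrite (powRr1 (ltW hx)).
have hq : 1 - alpha = 2 * phi * kb * s.
  move: hfix2; rewrite /FS2 /nstar -/s => h.
  have h' : (1 - alpha) / (2 * phi * kb * s) = 1.
    by apply: (mulIf (lt0r_neq0 hN)); rewrite h mul1r.
  have hd : 2 * phi * kb * s != 0 by rewrite gt_eqF // !mulr_gt0.
  by rewrite -[LHS](divfK hd) h' mul1r.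
have hpe' : pe = kb / (A * pk).
  move: hfix1; rewrite /FS1 -/eb -/pe -/pk => <-.
  by field; rewrite !gt_eqF.
have hphi' : phi = (1 - alpha) / (2 * kb * s).
  rewrite hq; field; rewrite !gt_eqF //.
have heb : eb = alpha * kb / 2.
  rewrite /eb /estar -/s hphi'; field; rewrite !gt_eqF //.
have epow : eb `^ (alpha - 1) = pe / eb by rewrite powm1.
have kpow : kb `^ (beta - 1) = pk / kb by rewrite powm1.
have Nm1 : Nb `^ (gamma - 1) = s / Nb by rewrite powm1.
have Np1 : Nb `^ (gamma + 1) = s * Nb by rewrite powp1.
set J := jacobianFS A phi gamma alpha beta kb Nb.
have E00 : J 0 0 = 2 * alpha + beta.
  rewrite /J mxE /= J11 //= -/eb epow kpow -/s -/pe -/pk hpe' heb hphi'.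
  field; rewrite !gt_eqF //.
have E01 : J 0 1 = alpha * gamma * kb / Nb.
  rewrite /J mxE /= J12 //= -/eb epow Nm1 -/s -/pe -/pk hpe' heb hphi'.
  field; rewrite !gt_eqF //.
have E10 : J 1 0 = - (Nb / kb).
  rewrite /J mxE /= J21 //= -/s hphi'.
  field; rewrite !gt_eqF //.
have E11 : J 1 1 = 1 - gamma.
  rewrite /J mxE /= J22 //= Nm1 -/s hphi'.
  field; rewrite !gt_eqF //.
have hP : 0 < 2 * alpha + beta by lra.
have ea : a = 2 / A.
  rewrite /a epow -/pe -/pk hpe' heb; field; rewrite !gt_eqF //.
have eEk : Ek = alpha.
  rewrite /Ek -/s hphi'; field; rewrite !gt_eqF //.
have eEN : EN = alpha * gamma * kb / (2 * Nb).
  rewrite /EN Nm1 -/s hphi'; field; rewrite !gt_eqF //.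
have eDk : Dk = - (1 / kb).
  rewrite /Dk -/s hphi'; field; rewrite !gt_eqF //.
have eDN : - DN * Nb = gamma.
  rewrite /DN Np1 -/s hphi'; field; rewrite !gt_eqF //.
rewrite eDN ea eEk eEN eDk in H1.
have k1 : 1 - 2 / A * (alpha * gamma * kb / (2 * Nb)) * - (1 / kb) * Nb /
      (2 / A * alpha + beta / A) - 1 / (A * (2 / A) * alpha + beta)
      = 1 + alpha * gamma / (2 * alpha + beta) - 1 / (2 * alpha + beta).
  field; rewrite !gt_eqF //.
rewrite k1 in H1.
have hD : (2 * alpha + beta) * (1 - gamma) + alpha * gamma < 1.
  have : (2 * alpha + beta) * (1 + alpha * gamma / (2 * alpha + beta) - 1 / (2 * alpha + beta))
     < (2 * alpha + beta) * gamma by rewrite ltr_pM2l.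
  have -> : (2 * alpha + beta) * (1 + alpha * gamma / (2 * alpha + beta) - 1 / (2 * alpha + beta))
     = 2 * alpha + beta + alpha * gamma - 1.
    field; rewrite !gt_eqF //.
  lra.
rewrite E00 E01 E10 E11 in hz.
have hD' : (2 * alpha + beta) * (1 - gamma) - alpha * gamma * kb / Nb * - (Nb / kb)
   = (2 * alpha + beta) * (1 - gamma) + alpha * gamma.
  field; rewrite !gt_eqF //.
rewrite hD' in hz.
move: hz; apply: root_lt1.
- exact: hD.
- nra.
- nra.
Qed.
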